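(* Let $C$ be an identifying code of $K_n\times K_m$. If $cs(C)=n-1$, then there is no column $C_j$ with $C\cap C_j=\{u,v\}$ (for distinct $u,v$) where both $u$ and $v$ are row-isolated in $C$. Similarly, if $rs(C)=m-1$, there is no row $R_r$ with $C\cap R_r=\{u,v\}$ (for distinct $u,v$) where both $u$ and $v$ are column-isolated in $C$.
   Context: $K_n\times K_m$ is the direct product of complete graphs: vertex set $[n]\times[m]$, with $(i,r)$ adjacent to $(j,s)$ iff $i\ne j$ and $r \ne s$. An identifying code is a dominating set $C$ with $N[x]\cap C\ne N[y]\cap C$ for all distinct vertices $x,y$ ($N[x]$ the closed neighborhood). Columns: $C_i=\{(i,t):t\in[m]\}$; rows: $R_r=\{(k,r):k\in[n]\}$. $cs(C)$ (resp. $rs(C)$) is the number of columns (resp. rows) meeting $C$. A vertex $v=(i,r)$ is column-isolated in $C$ if $C\cap C_i=\{v\}$ and row-isolated in $C$ if $C\cap R_r=\{v\}$. *)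

(* Defs.v *)
From mathcomp Require Import all_boot.
Set Implicit Arguments. Unset Strict Implicit. Unset Printing Implicit Defensive.

Section KnKm.
Variables n m : nat.
Definition vtx := ('I_n * 'I_m)%type.

Definition adj (x y : vtx) : bool := (x.1 != y.1) && (x.2 != y.2).

Definition cnbh (x : vtx) : {set vtx} := [set y | (y == x) || adj x y].

Definition dominating (C : {set vtx}) : Prop :=
  forall x : vtx, cnbh x :&: C != set0.

Definition identifying_code (C : {set vtx}) : Prop :=
  dominating C /\
  forall x y : vtx, x != y -> cnbh x :&: C != cnbh y :&: C.

Definition column (i : 'I_n) : {set vtx} := [set v | v.1 == i].
Definition row (r : 'I_m) : {set vtx} := [set v | v.2 == r].

Definition cs (C : {set vtx}) : nat := #|[set i : 'I_n | column i :&: C != set0]|.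
Definition rs (C : {set vtx}) : nat := #|[set r : 'I_m | row r :&: C != set0]|.

Definition col_isolated (C : {set vtx}) (v : vtx) : Prop := C :&: column v.1 = [set v].
Definition row_isolated (C : {set vtx}) (v : vtx) : Prop := C :&: row v.2 = [set v].
End KnKm.

(* Main.v *)
Require Import Defs.
From mathcomp Require Import all_boot.

Lemma exists_notin (T : finType) (A : {set T}) : #|A| < #|T| -> exists x, x \notin A.
Proof.
move=> h; case: (pickP (fun x => x \notin A)) => [x Hx|H]; first by exists x.
have : A = setT by apply/setP => x; rewrite inE; move: (H x) => /= /negbFE.
by move=> e; move: h; rewrite e cardsT ltnn.
Qed.

Lemma pair_neq (A B : eqType) (u v : A * B) : u != v -> u.1 = v.1 -> u.2 != v.2.
Proof.
case: u => a b; case: v => c d /= h e; apply/negP => /eqP e'.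
by move/negP: h; apply; rewrite e e'.
Qed.

Lemma pair_neq2 (A B : eqType) (u v : A * B) : u != v -> u.2 = v.2 -> u.1 != v.1.
Proof.
case: u => a b; case: v => c d /= h e; apply/negP => /eqP e'.
by move/negP: h; apply; rewrite e e'.
Qed.

Theorem mainTheorem10 (n m : nat) (C : {set vtx n m}) :
  identifying_code C ->
  (cs C = n.-1 ->
     ~ (exists (j : 'I_n) (u v : vtx n m),
          [/\ u != v, C :&: column m j = [set u; v],
              row_isolated C u & row_isolated C v])) /\
  (rs C = m.-1 ->
     ~ (exists (r : 'I_m) (u v : vtx n m),
          [/\ u != v, C :&: row n r = [set u; v],
              col_isolated C u & col_isolated C v])).
Proof.
move=> [dom idf]; split.
- move=> hcs [j [u [v [uv hj hu hv]]]].
  have [i0 Hi0] : exists i0, i0 \notin [set i : 'I_n | column m i :&: C != set0].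
    apply: exists_notin; move: hcs; rewrite /cs card_ord => ->.
    by case: (j) => k; case: (n) => //.
  move: Hi0; rewrite inE negbK => /eqP Hi0.
  have hi0 : forall y, y \in C -> y.1 <> i0.
    move=> y yC e; have : y \in column m i0 :&: C by rewrite !inE e eqxx.
    by rewrite Hi0 inE.
  have hcolj : forall y, y \in C -> y.1 = j -> y = u \/ y = v.
    move=> y yC e; move: hj => /setP /(_ y); rewrite !inE yC e eqxx /=.
    by case/esym/orP => /eqP; auto.
  have hrowu : forall y, y \in C -> y.2 = u.2 -> y = u.
    by move=> y yC e; move: hu => /setP /(_ y); rewrite !inE yC e eqxx /= => /esym/eqP.
  have hrowv : forall y, y \in C -> y.2 = v.2 -> y = v.
    by move=> y yC e; move: hv => /setP /(_ y); rewrite !inE yC e eqxx /= => /esym/eqP.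
  have : u \in C :&: column m j by rewrite hj !inE eqxx.
  rewrite !inE => /andP [uC /eqP u1].
  have : v \in C :&: column m j by rewrite hj !inE eqxx orbT.
  rewrite !inE => /andP [vC /eqP v1].
  have uv2 : u.2 != v.2 by apply: pair_neq; rewrite // u1 v1.
  pose x : vtx n m := (i0, v.2).
  have ux : u != x.
    by apply/negP => /eqP e; apply: (hi0 u uC); rewrite e.
  apply/negP: (idf u x ux); rewrite negbK; apply/eqP/setP => y.
  rewrite !inE /adj /=.
  case: (boolP (y \in C)) => yC; last by rewrite !andbF.
  rewrite !andbT.
  have yx : (y == x) = false.
    by apply/negbTE/negP => /eqP e; apply: (hi0 y yC); rewrite e.
  have -> : (i0 != y.1) = true by apply/negP => /eqP e; apply: (hi0 y yC).
  rewrite yx /=.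
  case: (eqVneq y u) => [->|yu] /=; first by rewrite eq_sym uv2.
  case: (eqVneq y.1 j) => [e|yj].
    case: (hcolj y yC e) => ey; first by rewrite ey eqxx in yu.
    by rewrite u1 e eqxx ey eqxx.
  rewrite u1 eq_sym yj /=.
  case: (eqVneq u.2 y.2) => [e|_].
    by rewrite (hrowu y yC (esym e)) eqxx in yu.
  case: (eqVneq v.2 y.2) => [e|] //.
  by move: yj; rewrite (hrowv y yC (esym e)) v1 eqxx.
- move=> hrs [j [u [v [uv hj hu hv]]]].
  have [i0 Hi0] : exists i0, i0 \notin [set r : 'I_m | row n r :&: C != set0].
    apply: exists_notin; move: hrs; rewrite /rs card_ord => ->.
    by case: (j) => k; case: (m) => //.
  move: Hi0; rewrite inE negbK => /eqP Hi0.
  have hi0 : forall y, y \in C -> y.2 <> i0.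
    move=> y yC e; have : y \in row n i0 :&: C by rewrite !inE e eqxx.
    by rewrite Hi0 inE.
  have hcolj : forall y, y \in C -> y.2 = j -> y = u \/ y = v.
    move=> y yC e; move: hj => /setP /(_ y); rewrite !inE yC e eqxx /=.
    by case/esym/orP => /eqP; auto.
  have hrowu : forall y, y \in C -> y.1 = u.1 -> y = u.
    by move=> y yC e; move: hu => /setP /(_ y); rewrite !inE yC e eqxx /= => /esym/eqP.
  have hrowv : forall y, y \in C -> y.1 = v.1 -> y = v.
    by move=> y yC e; move: hv => /setP /(_ y); rewrite !inE yC e eqxx /= => /esym/eqP.
  have : u \in C :&: row n j by rewrite hj !inE eqxx.
  rewrite !inE => /andP [uC /eqP u1].
  have : v \in C :&: row n j by rewrite hj !inE eqxx orbT.
  rewrite !inE => /andP [vC /eqP v1].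
  have uv2 : u.1 != v.1 by apply: pair_neq2; rewrite // u1 v1.
  pose x : vtx n m := (v.1, i0).
  have ux : u != x.
    by apply/negP => /eqP e; apply: (hi0 u uC); rewrite e.
  apply/negP: (idf u x ux); rewrite negbK; apply/eqP/setP => y.
  rewrite !inE /adj /=.
  case: (boolP (y \in C)) => yC; last by rewrite !andbF.
  rewrite !andbT.
  have yx : (y == x) = false.
    by apply/negbTE/negP => /eqP e; apply: (hi0 y yC); rewrite e.
  have -> : (i0 != y.2) = true by apply/negP => /eqP e; apply: (hi0 y yC).
  rewrite yx /= andbT.
  case: (eqVneq y u) => [->|yu] /=; first by rewrite eq_sym uv2.
  case: (eqVneq y.2 j) => [e|yj].
    case: (hcolj y yC e) => ey; first by rewrite ey eqxx in yu.
    by rewrite u1 e eqxx ey eqxx andbF.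
  rewrite u1 [j == _]eq_sym yj andbT.
  case: (eqVneq u.1 y.1) => [e|_].
    by rewrite (hrowu y yC (esym e)) eqxx in yu.
  case: (eqVneq v.1 y.1) => [e|] //.
  by move: yj; rewrite (hrowv y yC (esym e)) v1 eqxx.
Qed.
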